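(* Let $A\in\mathbb M_{N\times N}$ and $B=(b_1,\dots,b_M)\in\mathbb M_{N\times M}$ ($1\le M\le N$) satisfy $\mathrm{rank}[b_i,Ab_i,\dots,A^{N-1}b_i]=N$ for every $i=1,\dots,M$. Let $r>0$, $\bar x\in\mathbb R^N$ and $\bar\zeta\in\mathbb S^{N-1}$ be such that $$\bar x=\sum_{i=1}^M\int_0^r e^{-At}b_i\,\mathrm{sign}\big(\langle\bar\zeta,e^{-At}b_i\rangle\big)\,dt.$$ Then $$h(\bar x,\bar\zeta)=-\sum_{i=1}^M\big|\langle\bar\zeta,e^{-Ar}b_i\rangle\big|.$$
   Context: $h$ is the minimized Hamiltonian of the control system $\dot x=Ax+Bu$, $u\in[-1,1]^M$: $h(x,\zeta)=\langle\zeta,Ax\rangle+\min_{u\in[-1,1]^M}\langle\zeta,Bu\rangle$. $\mathbb S^{N-1}$ is the unit sphere. *)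

(* Defs.v *)
From HB Require Import structures.
From mathcomp Require Import all_boot all_order all_algebra.
From mathcomp Require Import all_classical all_reals all_analysis.
Set Implicit Arguments. Unset Strict Implicit. Unset Printing Implicit Defensive.
Import Order.TTheory GRing.Theory Num.Theory.
Import numFieldNormedType.Exports.
Local Open Scope classical_set_scope.
Local Open Scope ring_scope.

Section Defs.
Variable R : realType.

Definition expm (n : nat) (M : 'M[R]_n) : 'M[R]_n :=
  \matrix_(i, j) limn (series (fun k : nat => (M ^+ k) i j / (k`!)%:R)).

Definition dotv (n : nat) (u v : 'cV[R]_n) : R := \sum_(k < n) u k 0 * v k 0.

Definition kalman (n : nat) (A : 'M[R]_n) (b : 'cV[R]_n) : 'M[R]_n :=
  \matrix_(k, j) ((A ^+ j) *m b) k 0.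

Definition ctrl_cube (m : nat) : set 'cV[R]_m :=
  [set u | forall j, -1 <= u j 0 <= 1].

(* minimized Hamiltonian h(x,z) = <z,Ax> + min_{u in [-1,1]^m} <z,Bu> *)
Definition hamil (n m : nat) (A : 'M[R]_n) (B : 'M[R]_(n, m))
  (x z : 'cV[R]_n) : R :=
  dotv z (A *m x) + inf ((fun u => dotv z (B *m u)) @` @ctrl_cube m).

End Defs.

(* Main.v *)
Require Import Defs.
From HB Require Import structures.
From mathcomp Require Import all_boot all_order all_algebra.
From mathcomp Require Import all_classical all_reals all_analysis.
From mathcomp Require Import ring lra.
Set Implicit Arguments. Unset Strict Implicit. Unset Printing Implicit Defensive.
Import Order.TTheory GRing.Theory Num.Theory.
Import numFieldNormedType.Exports.
Local Open Scope classical_set_scope.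
Local Open Scope ring_scope.
Section Pow.
Variable R : realType.
Variable N : nat.
Variable A : 'M[R]_N.

Definition nrm1 (w : 'cV[R]_N) : R := \sum_k `|w k 0|.
Definition SA : R := \sum_i \sum_j `|A i j|.

Lemma nrm1_ge0 (w : 'cV[R]_N) : 0 <= nrm1 w.
Proof. by apply: sumr_ge0 => k _. Qed.

Lemma SA_ge0 : 0 <= SA.
Proof. by apply: sumr_ge0 => i _; apply: sumr_ge0. Qed.

Lemma entry_le (w : 'cV[R]_N) (k : 'I_N) : `|w k 0| <= nrm1 w.
Proof.
rewrite /nrm1 (bigD1 k) //= lerDl; by apply: sumr_ge0.
Qed.

Lemma dotv_le (u w : 'cV[R]_N) : `|dotv u w| <= nrm1 u * nrm1 w.
Proof.
rewrite /dotv /nrm1 mulr_suml (le_trans (ler_norm_sum _ _ _)) //.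
apply: ler_sum => k _; rewrite normrM; apply: ler_wpM2l => //.
exact: entry_le.
Qed.

Lemma mul_le (w : 'cV[R]_N) : nrm1 (A *m w) <= SA * nrm1 w.
Proof.
rewrite /nrm1 /SA mulr_suml; apply: ler_sum => i _.
rewrite mxE mulr_suml (le_trans (ler_norm_sum _ _ _)) //.
apply: ler_sum => j _; rewrite normrM; apply: ler_wpM2l => //.
exact: entry_le.
Qed.

Lemma pow_le n (w : 'cV[R]_N) : nrm1 (A ^+ n *m w) <= SA ^+ n * nrm1 w.
Proof.
elim: n => [|n IH]; first by rewrite expr0 mul1mx mul1r.
rewrite exprS -mulmxE -mulmxA (le_trans (mul_le _)) // exprS -mulrA.
by apply: ler_wpM2l => //; exact: SA_ge0.
Qed.

Definition coef (u v : 'cV[R]_N) (n : nat) : R :=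
  dotv u (A ^+ n *m v) * ((-1) ^+ n / n`!%:R).

Lemma coef_le (u v : 'cV[R]_N) n (x : R) :
  `|coef u v n * x ^+ n| <= (nrm1 u * nrm1 v) * exp_coeff (SA * `|x|) n.
Proof.
rewrite /coef /exp_coeff /= !normrM normrX normrN normr1 expr1n mul1r normfV normr_nat.
rewrite normrX exprMn.
rewrite [X in _ <= X](_ : _ = (nrm1 u * (SA ^+ n * nrm1 v)) * (`|x| ^+ n / n`!%:R)); last first.
  by rewrite -!mulrA; congr (_ * _); rewrite mulrCA !mulrA.
rewrite [X in X <= _](_ : _ = `|dotv u (A ^+ n *m v)| * (`|x| ^+ n / n`!%:R)); last first.
  by rewrite mulrAC mulrA.
apply: ler_wpM2r; first by rewrite divr_ge0 // exprn_ge0.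
apply: (le_trans (dotv_le _ _)); apply: ler_wpM2l; first exact: nrm1_ge0.
exact: pow_le.
Qed.

Lemma coef_cvg (u v : 'cV[R]_N) (x : R) : cvgn (pseries (coef u v) x).
Proof.
apply: normed_cvg.
apply: (@series_le_cvg _ _ ((nrm1 u * nrm1 v) *: exp_coeff (SA * `|x|))) => [n|n|n|].
- by rewrite /=.
- rewrite /= mulr_ge0 ?mulr_ge0 ?nrm1_ge0 //.
  by rewrite exprn_ge0 // mulr_ge0 ?SA_ge0.
- exact: (coef_le u v n x).
- exact/is_cvg_seriesZ/is_cvg_series_exp_coeff.
Qed.

End Pow.
Lemma cvg_bigsum (R : realType) (I : Type) (r : seq I) (s : I -> nat -> R) (l : I -> R) :
  (forall i, s i n @[n --> \oo] --> l i) ->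
  (\sum_(i <- r) s i n) @[n --> \oo] --> \sum_(i <- r) l i.
Proof.
move=> H; elim: r => [|a r IH].
  rewrite big_nil (_ : (fun n => _) = fun _ => 0); first exact: cvg_cst.
  by apply/funext => n; rewrite big_nil.
rewrite big_cons (_ : (fun n => _) = (s a) + (fun n => \sum_(i <- r) s i n)).
  exact: cvgD.
by apply/funext => n; rewrite big_cons.
Qed.

Section Phi.
Variable R : realType.
Variable N : nat.
Variable A : 'M[R]_N.

Definition phi (u v : 'cV[R]_N) (t : R) := dotv u (expm (- (t *: A)) *m v).

Lemma dotv_delta (w : 'cV[R]_N) l : dotv (delta_mx l 0) w = w l 0.
Proof.
rewrite /dotv (bigD1 l) //= big1 => [|k kl]; first by rewrite mxE !eqxx mul1r addr0.
by rewrite mxE (negbTE kl) mul0r.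
Qed.

Lemma dotvC (u w : 'cV[R]_N) : dotv u w = dotv w u.
Proof. by apply: eq_bigr => k _; rewrite mulrC. Qed.

Lemma dotv_trmx (u w : 'cV[R]_N) : dotv (A^T *m u) w = dotv u (A *m w).
Proof.
rewrite /dotv; under eq_bigr do rewrite mxE mulr_suml.
rewrite exchange_big /=; apply: eq_bigr => l _.
rewrite mxE mulr_sumr; apply: eq_bigr => k _; rewrite mxE; ring.
Qed.

Lemma exprZmx (c : R) (M : 'M[R]_N) k : (c *: M) ^+ k = c ^+ k *: M ^+ k.
Proof.
elim: k => [|k IH]; first by rewrite !expr0 scale1r.
by rewrite !exprS -!mulmxE IH scalemxAl -scalemxAr scalemxAl scalerA (mulrC c).
Qed.

Definition T (t : R) (l m : 'I_N) (k : nat) : R :=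
  ((- (t *: A)) ^+ k) l m / k`!%:R.

Lemma T_E t l m k : T t l m k = coef A (delta_mx l 0) (delta_mx m 0) k * t ^+ k.
Proof.
rewrite /T /coef -scaleNr exprZmx mxE dotv_delta -colE mxE (exprNn t); ring.
Qed.

Lemma T_cvg t l m : cvgn (series (T t l m)).
Proof.
rewrite (_ : T t l m = (fun k => coef A (delta_mx l 0) (delta_mx m 0) k * t ^+ k)).
  exact: coef_cvg.
by apply/funext => k; rewrite T_E.
Qed.

Lemma phi_cvg u v t : pseries (coef A u v) t @ \oo --> phi u v t.
Proof.
rewrite (_ : pseries (coef A u v) t =
   (fun n => \sum_(l < N) \sum_(m < N) (u l 0 * v m 0) * series (T t l m) n)).
  rewrite (_ : phi u v t = \sum_(l < N) \sum_(m < N) (u l 0 * v m 0) * expm (- (t *: A)) l m).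
    apply: cvg_bigsum => l; apply: cvg_bigsum => m; apply: cvgMr.
    rewrite /expm mxE; exact: T_cvg.
  rewrite /phi /dotv; apply: eq_bigr => l _; rewrite mxE mulr_sumr.
  by apply: eq_bigr => m _; ring.
apply/funext => n; rewrite /pseries /series /=.
under [RHS]eq_bigr do under eq_bigr do rewrite mulr_sumr.
under [RHS]eq_bigr do rewrite exchange_big.
rewrite exchange_big /=; apply: eq_bigr => k _.
rewrite /coef /dotv !big_distrl /=; apply: eq_bigr => l _.
rewrite mxE !big_distrr !big_distrl /=; apply: eq_bigr => m _.
rewrite /T -scaleNr exprZmx mxE (exprNn t); ring.
Qed.

Lemma phiE u v t : phi u v t = limn (pseries (coef A u v) t).
Proof. by apply/esym/cvg_lim => //; exact: phi_cvg. Qed.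

End Phi.
Section Deriv.
Variable R : realType.
Variable N : nat.
Variable A : 'M[R]_N.

Lemma coef_diffs (u v : 'cV[R]_N) :
  pseries_diffs (coef A u v) = - coef A (A^T *m u) v.
Proof.
apply/funext => n; transitivity (- coef A (A^T *m u) v n); last by [].
rewrite /pseries_diffs /coef dotv_trmx.
rewrite exprS -mulmxE -mulmxA factS natrM exprS.
have h : n.+1%:R != 0 :> R by rewrite pnatr_eq0.
have h2 : n`!%:R != 0 :> R by rewrite pnatr_eq0 -lt0n fact_gt0.
field.
by rewrite h2 addrC natr1 h.
Qed.

Lemma pseriesN (c : nat -> R) x : pseries (- c) x = - pseries c x.
Proof.
apply/funext => n; transitivity (- pseries c x n); last by [].
rewrite /pseries /series /= -sumrN.
by apply: eq_bigr => i _; rewrite mulNr.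
Qed.

Lemma phi_derive (u v : 'cV[R]_N) (t : R) :
  is_derive t (1 : R) (phi A u v) (- phi A (A^T *m u) v t).
Proof.
have E : phi A u v = fun x => limn (pseries (coef A u v) x).
  by apply/funext => x; rewrite phiE.
have -> : - phi A (A^T *m u) v t = limn (pseries (pseries_diffs (coef A u v)) t).
  rewrite coef_diffs pseriesN limN; last exact: coef_cvg.
  by rewrite phiE.
rewrite E; apply: (@pseries_snd_diffs _ _ (`|t| + 1)).
- exact: coef_cvg.
- rewrite coef_diffs pseriesN; apply: is_cvgN; exact: coef_cvg.
- rewrite coef_diffs pseries_diffsN coef_diffs opprK; exact: coef_cvg.
- by rewrite [X in _ < X]ger0_norm ?ltrDl // addr_ge0.
Qed.

End Deriv.
Section AbsFTC.
Variable R : realType.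

Definition hsg (f : R -> R) (n : nat) (t : R) : R :=
  f t / Num.sqrt (f t ^+ 2 + harmonic n ^+ 2).

Lemma harm_gt0 n : 0 < harmonic n :> R.
Proof. by rewrite /harmonic /= invr_gt0 ltr0n. Qed.

Lemma sqrt_gt0 (f : R -> R) n t : 0 < Num.sqrt (f t ^+ 2 + harmonic n ^+ 2).
Proof.
by rewrite sqrtr_gt0 ltr_wpDl ?sqr_ge0 // exprn_gt0 // harm_gt0.
Qed.

Lemma hsg_le1 (f : R -> R) n t : `|hsg f n t| <= 1.
Proof.
rewrite /hsg normrM normfV (gtr0_norm (sqrt_gt0 f n t)) ler_pdivrMr ?sqrt_gt0 // mul1r.
by rewrite -sqrtr_sqr ler_sqrt ?lerDl ?sqr_ge0 // addr_ge0 ?sqr_ge0.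
Qed.

Lemma harm2_cvg : harmonic n ^+ 2 @[n --> \oo] --> (0 : R).
Proof.
rewrite (_ : (fun n => _) = harmonic \* harmonic); last first.
  by apply/funext => n; rewrite expr2.
rewrite -(mulr0 (0 : R)); apply: cvgM; exact: cvg_harmonic.
Qed.

Lemma hsg_cvg (f : R -> R) t : hsg f n t @[n --> \oo] --> Num.sg (f t).
Proof.
have [ft0|ft0] := eqVneq (f t) 0.
  rewrite ft0 sgr0 (_ : (fun n => _) = fun _ => 0); first exact: cvg_cst.
  by apply/funext => n; rewrite /hsg ft0 mul0r.
have Hs : Num.sqrt (f t ^+ 2 + harmonic n ^+ 2) @[n --> \oo] --> `|f t|.
  rewrite -sqrtr_sqr -[X in Num.sqrt X]addr0.
  apply: (continuous_cvg _ (@sqrt_continuous R _)).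
  apply: cvgD; first exact: cvg_cst.
  exact: harm2_cvg.
have -> : Num.sg (f t) = f t * `|f t|^-1.
  by rewrite -{2}(mulr_sg_norm (f t)) mulfK // normr_eq0.
apply: cvgM; first exact: cvg_cst.
by apply: cvgV => //; rewrite normr_eq0.
Qed.

End AbsFTC.
Section DCT.
Variable R : realType.

Lemma hsg_cont (f : R -> R) n : continuous f -> continuous (hsg f n).
Proof.
move=> cf x; rewrite /hsg.
apply: cvgM; first exact: cf.
apply: cvgV; first by rewrite gt_eqF // sqrt_gt0.
apply: (continuous_cvg _ (@sqrt_continuous R _)).
apply: cvgD; last exact: cvg_cst.
rewrite (_ : (fun t => f t ^+ 2) = f \* f); last by apply/funext => t; rewrite expr2.
rewrite expr2; apply: cvgM; exact: cf.
Qed.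

Lemma contM (f g : R -> R) : continuous f -> continuous g -> continuous (fun t => f t * g t).
Proof. by move=> cf cg x; apply: cvgM; [exact: cf | exact: cg]. Qed.

Lemma sg_dct (f c : R -> R) (r : R) : continuous f -> continuous c ->
  lebesgue_measure.-integrable `[0%R, r] (EFin \o (fun t => c t * Num.sg (f t))) /\
  (\int[lebesgue_measure]_(t in `[0%R, r]) (c t * hsg f n t)%:E)%E @[n --> \oo] -->
  (\int[lebesgue_measure]_(t in `[0%R, r]) (c t * Num.sg (f t))%:E)%E.
Proof.
move=> cf cc.
have mD : measurable `[0%R, r] by exact: measurable_itv.
have ms n : measurable_fun `[0%R, r] (fun t => c t * hsg f n t).
  apply: measurable_funTS; apply: measurable_realfun.continuous_measurable_fun.
  by apply: contM => //; exact: hsg_cont.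
have pw x : (fun n => c x * hsg f n x) @ \oo --> c x * Num.sg (f x).
  apply: cvgM; [exact: cvg_cst | exact: hsg_cvg].
have msg : measurable_fun `[0%R, r] (fun t => c t * Num.sg (f t)).
  exact: (measurable_realfun.measurable_fun_cvg ms (fun x _ => pw x)).
have ic : lebesgue_measure.-integrable `[0%R, r] (EFin \o c).
  by apply: continuous_compact_integrable; [exact: segment_compact | exact: continuous_subspaceT].
have ic' : lebesgue_measure.-integrable `[0%R, r] (EFin \o (fun t => `|c t|)).
  apply: continuous_compact_integrable; first exact: segment_compact.
  apply: continuous_subspaceT => x; apply: continuous_comp; first exact: cc.
  exact: norm_continuous.
split.
  apply: le_integrable (ic) => //; first exact/measurable_realfun.measurable_EFinP.
  move=> x _; rewrite /= lee_fin normrM -[X in _ <= X]mulr1 ler_wpM2l //.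
  by rewrite normr_sg; case: (_ == 0).
apply: (@dominated_cvg _ _ _ (@lebesgue_measure R) _ (measurable_itv _) (fun n t => (c t * hsg f n t)%:E) (fun t => (c t * Num.sg (f t))%:E) (EFin \o (fun t => `|c t|)) _ _ _ ic').
- by move=> n; apply/measurable_realfun.measurable_EFinP; exact: ms.
- move=> x _; apply: cvg_EFin; first exact: nearW.
  exact: pw.
- by [].
- move=> n x _; rewrite /= lee_fin normrM.
  by rewrite -[X in _ <= X]mulr1 ler_wpM2l // hsg_le1.
Qed.

End DCT.
Section FTC.
Variable R : realType.

Lemma derive_cont (f df : R -> R) : (forall x, is_derive x (1:R) f (df x)) -> continuous f.
Proof.
move=> H x; apply/differentiable_continuous/derivable1_diffP.
exact: (@ex_derive _ _ _ _ _ _ _ (H x)).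
Qed.

Lemma sqrt_cvg (f : R -> R) t :
  Num.sqrt (f t ^+ 2 + harmonic n ^+ 2) @[n --> \oo] --> `|f t|.
Proof.
rewrite -sqrtr_sqr -[X in Num.sqrt X]addr0.
apply: (continuous_cvg _ (@sqrt_continuous R _)).
apply: cvgD; first exact: cvg_cst.
exact: harm2_cvg.
Qed.

Lemma G_derive (f c : R -> R) n x : (forall x, is_derive x (1:R) f (- c x)) ->
  is_derive x (1:R) (fun t => - Num.sqrt (f t ^+ 2 + harmonic n ^+ 2)) (c x * hsg f n x).
Proof.
move=> df.
pose q := fun t => f t ^+ 2 + harmonic n ^+ 2.
have d1 := @is_deriveX _ _ f 2 x 1 _ (df x).
have d2 := is_deriveD d1 (is_derive_cst (harmonic n ^+ 2 : R) x (1:R)).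
have dq : is_derive x (1:R) q ((2%:R * f x ^+ 1) *: (- c x) + 0) by exact: d2.
have qx : 0 < q x by rewrite /q ltr_wpDl ?sqr_ge0 // exprn_gt0 // harm_gt0.
have ds := is_derive1_comp (is_derive1_sqrt qx) dq.
have := is_deriveN ds.
rewrite /hsg; congr is_derive.
have s0 : Num.sqrt (q x) != 0 by rewrite gt_eqF // sqrtr_gt0.
rewrite /q in s0 *; rewrite expr1 addr0 /GRing.scale /=.
by field; exact: s0.
Qed.

End FTC.
Section FTC2.
Variable R : realType.

Lemma abs_ftc (f c : R -> R) (r : R) : 0 < r ->
  (forall x, is_derive x (1:R) f (- c x)) -> continuous c ->
  \int[lebesgue_measure]_(t in `[0, r]) (c t * Num.sg (f t)) = `|f 0| - `|f r|.
Proof.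
move=> r0 df cc.
have cf : continuous f := derive_cont df.
have [_ Hcv] := sg_dct r cf cc.
pose G n t := - Num.sqrt (f t ^+ 2 + harmonic n ^+ 2).
have dG n x : is_derive x (1:R) (G n) (c x * hsg f n x) by exact: G_derive.
have FT n : (\int[lebesgue_measure]_(t in `[0%R, r]) (c t * hsg f n t)%:E)%E =
    ((G n r)%:E - (G n 0)%:E)%E.
  apply: continuous_FTC2 => //.
  - apply: continuous_subspaceT; apply: contM => //; exact: hsg_cont.
  - split.
    + move=> x _; exact: (@ex_derive _ _ _ _ _ _ _ (dG n x)).
    + apply: cvg_at_right_filter; exact: (derive_cont (dG n)).
    + apply: cvg_at_left_filter; exact: (derive_cont (dG n)).
  - move=> x _; rewrite derive1E; exact: derive_val.
have H2 : ((G n r - G n 0)%:E) @[n --> \oo] --> ((`|f 0| - `|f r|)%:E).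
  apply: cvg_EFin; first exact: nearW.
  rewrite (_ : `|f 0| - `|f r| = - `|f r| - - `|f 0|); last by ring.
  apply: cvgB; apply: cvgN; exact: sqrt_cvg.
have Hcv' : ((G n r - G n 0)%:E) @[n --> \oo] -->
   (\int[lebesgue_measure]_(t in `[0%R, r]) (c t * Num.sg (f t))%:E)%E.
  rewrite (_ : (fun n => _) = fun n =>
     (\int[lebesgue_measure]_(t in `[0%R, r]) (c t * hsg f n t)%:E)%E) //.
  by apply/funext => n; rewrite FT EFinB.
have E1 := cvg_lim (@ereal_hausdorff R) Hcv'.
have E2 := cvg_lim (@ereal_hausdorff R) H2.
by rewrite /Rintegral -E1 E2.
Qed.

End FTC2.
Section Final.
Variable R : realType.

Lemma inf_cube (N M : nat) (B : 'M[R]_(N, M)) (z : 'cV[R]_N) :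
  inf ((fun u => dotv z (B *m u)) @` @ctrl_cube R M) =
  - \sum_(j < M) `|dotv z (col j B)|.
Proof.
have E u : dotv z (B *m u) = \sum_(j < M) dotv z (col j B) * u j 0.
  rewrite /dotv; under eq_bigr do rewrite mxE big_distrr /=.
  rewrite exchange_big /=; apply: eq_bigr => j _.
  rewrite big_distrl /=; apply: eq_bigr => k _; rewrite mxE; ring.
set S := (fun u => dotv z (B *m u)) @` @ctrl_cube R M.
set v := - \sum_(j < M) `|dotv z (col j B)|.
have lb : lbound S v.
  move=> y [u cu <-]; rewrite E /v -sumrN; apply: ler_sum => j _.
  have : `|dotv z (col j B) * u j 0| <= `|dotv z (col j B)|.
    rewrite normrM -[X in _ <= X]mulr1 ler_wpM2l //.
    by rewrite ler_norml; exact: (cu j).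
  by rewrite ler_norml => /andP[].
have mem : S v.
  exists (\col_(j < M) (- Num.sg (dotv z (col j B)))).
    move=> j; rewrite mxE -ler_norml normrN normr_sg.
    by case: (_ != 0).
  rewrite E /v -sumrN; apply: eq_bigr => j _.
  by rewrite mxE normrEsg mulrN mulrC.
apply/le_anti/andP; split.
  apply: (ge_inf _ mem); exists v; exact: lb.
by apply: lb_le_inf => //; exists v.
Qed.

Lemma Rint_sum (r : R) (I : Type) (s : seq I) (F : I -> R -> R) :
  (forall i, lebesgue_measure.-integrable `[0%R, r] (EFin \o F i)) ->
  \int[lebesgue_measure]_(x in `[0%R, r]) (\sum_(i <- s) F i x) =
  \sum_(i <- s) \int[lebesgue_measure]_(x in `[0%R, r]) F i x.
Proof.
move=> H; elim: s => [|a s IH].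
  rewrite big_nil (_ : (fun x => _) = fun _ => 0); last first.
    by apply/funext => x; rewrite big_nil.
  by rewrite /Rintegral integral0.
rewrite big_cons (_ : (fun x => _) = fun x => F a x + \sum_(i <- s) F i x); last first.
  by apply/funext => x; rewrite big_cons.
rewrite RintegralD; first by rewrite IH.
- exact: measurable_itv.
- exact: H.
rewrite (_ : EFin \o _ = fun x => \sum_(i <- s) (EFin \o F i) x).
  by apply: integrable_sum => //.
by apply/funext => x; rewrite /= sumEFin.
Qed.

Lemma phi0 (N : nat) (A : 'M[R]_N) (u v : 'cV[R]_N) : phi A u v 0 = dotv u v.
Proof.
have H : pseries (coef A u v) 0 @ \oo --> phi A u v 0 by exact: phi_cvg.
have H2 : pseries (coef A u v) 0 @ \oo --> dotv u v.
  rewrite -cvg_shiftS (_ : (fun n => _) = fun _ => dotv u v); first exact: cvg_cst.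
  apply/funext => n; rewrite /pseries /series /= big_nat_recl //= big1 ?addr0.
    by rewrite /coef expr0 mul1mx expr0 mulr1 fact0 divr1 mulr1.
  by move=> i _; rewrite expr0n /= mulr0.
have E1 := cvg_lim (@Rhausdorff R) H.
have E2 := cvg_lim (@Rhausdorff R) H2.
by rewrite -E1 -E2.
Qed.

End Final.
Theorem lemma4p2 (R : realType) (N M : nat)
  (A : 'M[R]_N) (B : 'M[R]_(N, M)) (r : R) (xbar zbar : 'cV[R]_N) :
  (1 <= M)%N -> (M <= N)%N ->
  (forall i : 'I_M, \rank (kalman A (col i B)) = N) ->
  0 < r ->
  dotv zbar zbar = 1 ->
  (forall k : 'I_N,
     xbar k 0 = \sum_(i < M)
       \int[lebesgue_measure]_(t in `[0, r])
          ((expm (- (t *: A)) *m col i B) k 0 *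
           Num.sg (dotv zbar (expm (- (t *: A)) *m col i B)))) ->
  hamil A B xbar zbar =
    - \sum_(i < M) `| dotv zbar (expm (- (r *: A)) *m col i B) |.
Proof.
move=> _ _ _ r0 _ Hx.
rewrite /hamil inf_cube.
have Hf i : forall t, is_derive t (1:R) (phi A zbar (col i B))
    (- phi A (A^T *m zbar) (col i B) t) by move=> t; exact: phi_derive.
have cg i : continuous (phi A (A^T *m zbar) (col i B)).
  by apply: derive_cont => t; exact: phi_derive.
have cf i : continuous (phi A zbar (col i B)) by exact: derive_cont (Hf i).
have ce (i : 'I_M) (k : 'I_N) : continuous (fun t : R => (expm (- (t *: A)) *m col i B) k 0).
  rewrite (_ : (fun t => _) = phi A (delta_mx k 0) (col i B)).
    by apply: derive_cont => t; exact: phi_derive.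
  by apply/funext => t; rewrite /phi dotv_delta.
have int (i : 'I_M) (k : 'I_N) : lebesgue_measure.-integrable `[0%R, r]
    (EFin \o (fun t => (expm (- (t *: A)) *m col i B) k 0 *
                       Num.sg (phi A zbar (col i B) t))).
  exact: (sg_dct r (cf i) (ce i k)).1.
have key : dotv zbar (A *m xbar) = \sum_(i < M)
    (`|dotv zbar (col i B)| - `|dotv zbar (expm (- (r *: A)) *m col i B)|).
  rewrite -dotv_trmx /dotv.
  under eq_bigr do rewrite Hx big_distrr /=.
  rewrite exchange_big /=; apply: eq_bigr => i _.
  transitivity (`|phi A zbar (col i B) 0| - `|phi A zbar (col i B) r|); last first.
    by rewrite phi0.
  rewrite -(abs_ftc r0 (Hf i) (cg i)).
  transitivity (\sum_(k < N) \int[lebesgue_measure]_(t in `[0%R, r])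
     ((A^T *m zbar) k 0 * ((expm (- (t *: A)) *m col i B) k 0 *
                       Num.sg (phi A zbar (col i B) t)))).
    apply: eq_bigr => k _; rewrite RintegralZl //; exact: measurable_itv.
  rewrite -Rint_sum; last first.
    move=> k.
    pose w := (A^T *m zbar) k 0.
    pose F := fun t => (expm (- (t *: A)) *m col i B) k 0 * Num.sg (phi A zbar (col i B) t).
    rewrite (_ : EFin \o _ = (fun t => w%:E * (EFin \o F) t)%E).
      by apply: integrableZl; [exact: measurable_itv | exact: (int i k)].
    by apply/funext => t.
  apply: eq_Rintegral => t _.
  rewrite /phi /dotv big_distrl /=; apply: eq_bigr => k _; ring.
rewrite key sumrB; ring.
Qed.
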